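(* If $d_1-p_1\ge d_2-p_2\ge\cdots\ge d_n-p_n$, then first-fit (equivalently next-fit) satisfies $FF(I)<2\,OPT(I)$ for every such instance $I$ with $OPT(I)\ge 2$ (and $FF(I)=1$ when $OPT(I)=1$); in particular first-fit is a 2-approximation on this class. The bound is tight: for every integer $k\ge1$ there is an instance of this class with $OPT(I)=k+1$ and $FF(I)=2k+1$, namely the instance with $3k+1$ jobs $a_1,\dots,a_k$ with $(p,d)=(k,2k)$, $b_1,\dots,b_k$ with $(p,d)=(1,k+1)$, and $c_1,\dots,c_{k+1}$ with $(p,d)=(k+1,2k+1)$, in the fixed order $a_1,b_1,a_2,b_2,\dots,a_k,b_k,c_1,c_2,\dots,c_{k+1}$ (all jobs have slack $k$), so that $\sup_I FF(I)/OPT(I)=2$ on this class.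
   Context: Fixed order scheduling with deadlines: there are jobs $J=\{1,\dots,n\}$, each job $j$ having a processing time $p_j\in\mathbb{N}$, $p_j>0$, and a deadline $d_j\in\mathbb{N}$ with $d_j\ge p_j$; the slack of job $j$ is $d_j-p_j$. All jobs are released at time $0$; job $j$ precedes job $k$ in the fixed order iff $j<k$. A schedule $\tau:J\to\{1,\dots,n\}$ assigns jobs to identical machines; each machine processes its jobs in the fixed order from time $0$ without idle time or preemption, so job $j$ completes at $\sum_{k\le j,\tau(k)=\tau(j)}p_k$; it is feasible if every job completes by its deadline. $OPT(I)$ is the minimum number of machines used by a feasible schedule. First-fit (FF): machines indexed $1,2,\dots$; process jobs in the fixed order and assign each job $j$ to the smallest-index machine whose current load (sum of processing times already assigned) plus $p_j$ is at most $d_j$; $FF(I)$ is the number of nonempty machines. Next-fit (NF): assign job $j$ to the most recently opened machine if it fits there, otherwise to a new machine. *)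

(* Defs.v *)
From mathcomp Require Import all_boot.
Set Implicit Arguments. Unset Strict Implicit. Unset Printing Implicit Defensive.

(* An instance is the list of jobs in the fixed order; job j (0-based index)
   is the pair (p_j, d_j) = (processing time, deadline). *)
Definition instance := seq (nat * nat).

Definition ptime (I : instance) (j : nat) : nat := (nth (0, 0) I j).1.
Definition dline (I : instance) (j : nat) : nat := (nth (0, 0) I j).2.
Definition slack (I : instance) (j : nat) : nat := dline I j - ptime I j.

Definition valid_instance (I : instance) : bool :=
  all (fun x => (0 < x.1) && (x.1 <= x.2)) I.

Definition slack_nonincr (I : instance) : Prop :=
  forall i j, i <= j -> j < size I -> slack I j <= slack I i.

Definition schedule (I : instance) := {ffun 'I_(size I) -> 'I_(size I)}.

Definition completion (I : instance) (tau : schedule I) (j : 'I_(size I)) : nat :=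
  \sum_(k < size I | (k <= j) && (tau k == tau j)) ptime I k.

Definition feasible (I : instance) (tau : schedule I) : bool :=
  [forall j : 'I_(size I), completion tau j <= dline I j].

Definition nmach (I : instance) (tau : schedule I) : nat :=
  #|[set tau j | j : 'I_(size I)]|.

(* OPT(I): minimum number of machines over feasible schedules (the
   one-job-per-machine schedule is feasible, so size I is a valid default). *)
Definition OPT (I : instance) : nat :=
  \big[minn/size I]_(tau : schedule I | feasible tau) nmach tau.

(* First-fit: loads = current loads of the opened machines, in index order. *)
Definition ff_step (loads : seq nat) (job : nat * nat) : seq nat :=
  let i := find (fun l => l + job.1 <= job.2) loads in
  if i < size loads then set_nth 0 loads i (nth 0 loads i + job.1)
  else rcons loads job.1.

Definition FF (I : instance) : nat := size (foldl ff_step [::] I).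

Definition nf_step (loads : seq nat) (job : nat * nat) : seq nat :=
  match loads with
  | [::] => [:: job.1]
  | x :: s =>
      if last x s + job.1 <= job.2
      then rcons (belast x s) (last x s + job.1)
      else rcons loads job.1
  end.

Definition NF (I : instance) : nat := size (foldl nf_step [::] I).

Definition tight_instance (k : nat) : instance :=
  flatten [seq [:: (k, 2 * k); (1, k + 1)] | _ <- iota 0 k]
  ++ nseq k.+1 (k + 1, 2 * k + 1).

(* Main.v *)
Require Import Defs.
From mathcomp Require Import all_boot.
From mathcomp Require Import zify.
From mathcomp Require all_order all_algebra ring lra.
Set Implicit Arguments. Unset Strict Implicit. Unset Printing Implicit Defensive.

Lemma nf_step_rcons ls L (job : nat * nat) :
  nf_step (rcons ls L) job =
  if L + job.1 <= job.2 then rcons ls (L + job.1) else rcons (rcons ls L) job.1.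
Proof.
case: ls => [|x s] /=; first by case: ifP.
by rewrite last_rcons belast_rcons.
Qed.

Lemma ff_step_rcons ls L (job : nat * nat) :
  all (fun l => job.2 < l + job.1) ls ->
  ff_step (rcons ls L) job = nf_step (rcons ls L) job.
Proof.
move=> Hall; rewrite nf_step_rcons /ff_step -cats1 find_cat.
have -> : has (fun l => l + job.1 <= job.2) ls = false.
  apply/negbTE/hasPn => l /(allP Hall); by rewrite ltnNge.
rewrite /= size_cat /=.
case H: (L + job.1 <= job.2).
  rewrite addn0 addn1 ltnSn nth_cat ltnn subnn /= cats1.
  elim: ls {Hall} => [|y ys IH] //=. by rewrite IH.
by rewrite ltnn cats1.
Qed.

Section Inst.
Variable I : instance.
Hypothesis Hv : valid_instance I.
Hypothesis Hs : slack_nonincr I.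

Lemma valid_nth j : j < size I -> 0 < ptime I j /\ ptime I j <= dline I j.
Proof.
move=> Hj; have /allP/(_ _ (mem_nth (0,0) Hj)) := Hv.
by case/andP => /= H1 H2; split.
Qed.

Lemma fits_iff j L : j < size I ->
  (L + ptime I j <= dline I j) = (L <= slack I j).
Proof.
move=> Hj; have [H1 H2] := valid_nth Hj; rewrite /slack; lia.
Qed.

Lemma FF_NF_prefix j : j <= size I ->
  foldl ff_step [::] (take j I) = foldl nf_step [::] (take j I) /\
  (j = 0 /\ foldl nf_step [::] (take j I) = [::] \/
   exists ls L, foldl nf_step [::] (take j I) = rcons ls L /\
     forall k, j <= k < size I -> all (fun l => slack I k < l) ls).
Proof.
elim: j => [|j IH] Hj.
  by rewrite take0; split=> //; left.
have Hj' : j < size I by [].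
have [IH1 IH2] := IH (ltnW Hj).
rewrite (take_nth (0,0) Hj') !foldl_rcons IH1.
set job := nth (0,0) I j.
have Hp : job.1 = ptime I j by [].
have Hd : job.2 = dline I j by [].
case: IH2 => [[Hj0 ->]|[ls [L [-> Hall]]]].
  split=> //; right; exists [::], job.1; split=> //.
rewrite ff_step_rcons; last first.
  apply/allP => l Hl; have := allP (Hall j _) l Hl.
  rewrite leqnn Hj' => /(_ isT).
  rewrite Hp Hd /slack; have [H1 H2] := valid_nth Hj'; lia.
split=> //; right.
rewrite nf_step_rcons Hp Hd fits_iff //.
case: ifP => Hfit.
  exists ls, (L + ptime I j); split=> // k /andP[Hk1 Hk2].
  apply: Hall; rewrite Hk2 andbT; lia.
exists (rcons ls L), (ptime I j); split=> // k /andP[Hk1 Hk2].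
rewrite all_rcons; apply/andP; split.
  have := Hs (ltnW Hk1) Hk2; move/negbT: Hfit; rewrite -ltnNge; lia.
apply: Hall; rewrite Hk2 andbT; lia.
Qed.

Lemma FF_eq_NF : FF I = NF I.
Proof.
rewrite /FF /NF; have := FF_NF_prefix (leqnn (size I)).
by rewrite take_size => -[->].
Qed.

End Inst.

Lemma map_cst (T U : Type) (c : U) (l : seq T) : [seq c | _ <- l] = nseq (size l) c.
Proof. by elim: l => //= x l ->. Qed.

Lemma tight_eq k : tight_instance k =
  flatten (nseq k [:: (k, 2 * k); (1, k + 1)]) ++ nseq k.+1 (k + 1, 2 * k + 1).
Proof. by rewrite /tight_instance map_cst size_iota. Qed.

Lemma size_pairs (T : Type) (X Y : T) m : size (flatten (nseq m [:: X; Y])) = 2 * m.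
Proof. elim: m => //= m IH; rewrite IH; lia. Qed.

Lemma nth_pairs (T : Type) (x0 X Y : T) m j :
  nth x0 (flatten (nseq m [:: X; Y])) j =
  if j < 2 * m then (if odd j then Y else X) else x0.
Proof.
elim: m j => [|m IH] j /=; first by rewrite nth_nil.
case: j => [|[|j]] //=; first by have -> : 1 < 2 * m.+1 by lia.
rewrite IH negbK; have -> : (j.+2 < 2 * m.+1) = (j < 2 * m) by lia.
by [].
Qed.

Lemma size_tight k : size (tight_instance k) = 3 * k + 1.
Proof. rewrite tight_eq size_cat size_pairs size_nseq; lia. Qed.

Lemma nth_tight k j : nth (0, 0) (tight_instance k) j =
  if j < 2 * k then (if odd j then (1, k + 1) else (k, 2 * k))
  else if j < 3 * k + 1 then (k + 1, 2 * k + 1) else (0, 0).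
Proof.
rewrite tight_eq nth_cat size_pairs nth_pairs; case: ifP => Hj; first by rewrite Hj.
rewrite nth_nseq; have -> : (j - 2 * k < k.+1) = (j < 3 * k + 1) by move/negbT: Hj; lia.
by [].
Qed.

Lemma valid_tight k : 1 <= k -> valid_instance (tight_instance k).
Proof.
move=> Hk; apply/(all_nthP (0, 0)) => j Hj; rewrite nth_tight.
rewrite size_tight in Hj; rewrite Hj.
by case: ifP => H1; [case: ifP => H2|]; rewrite /=; lia.
Qed.

Lemma slack_tight k j : j < 3 * k + 1 -> slack (tight_instance k) j = k.
Proof.
move=> Hj; rewrite /slack /dline /ptime nth_tight Hj.
by case: ifP => H1; [case: ifP => H2|]; rewrite /=; lia.
Qed.

Lemma nonincr_tight k : slack_nonincr (tight_instance k).
Proof.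
move=> i j Hij; rewrite size_tight => Hj.
rewrite !slack_tight //; lia.
Qed.

Lemma nseq_rcons (T : Type) (x : T) j : nseq j.+1 x = rcons (nseq j x) x.
Proof. by elim: j => //= j <-. Qed.

Lemma nf_pairs k m j : 1 <= k ->
  foldl nf_step (nseq j (k + 1)) (flatten (nseq m [:: (k, 2 * k); (1, k + 1)])) =
  nseq (j + m) (k + 1).
Proof.
move=> Hk; elim: m j => [|m IH] j /=; first by rewrite addn0.
rewrite -(addSnnS j m) -IH; congr foldl.
case: j => [|j]; first by rewrite /= leqnn.
rewrite [in LHS]nseq_rcons nf_step_rcons /=.
have -> : (k + 1 + k <= 2 * k) = false by lia.
rewrite nf_step_rcons /= leqnn.
by rewrite -!nseq_rcons.
Qed.

Lemma nf_cs k m j : 1 <= j ->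
  foldl nf_step (nseq j (k + 1)) (nseq m (k + 1, 2 * k + 1)) = nseq (j + m) (k + 1).
Proof.
elim: m j => [|m IH] j Hj /=; first by rewrite addn0.
rewrite -(addSnnS j m) -IH //; congr foldl.
case: j Hj => [//|j] _.
rewrite [in LHS]nseq_rcons nf_step_rcons /=.
have -> : (k + 1 + (k + 1) <= 2 * k + 1) = false by lia.
by rewrite -!nseq_rcons.
Qed.

Lemma FF_tight k : 1 <= k -> FF (tight_instance k) = 2 * k + 1.
Proof.
move=> Hk; rewrite FF_eq_NF; [|exact: valid_tight|exact: nonincr_tight].
rewrite /NF tight_eq foldl_cat -[[::]]/(nseq 0 (k + 1)) nf_pairs // add0n.
rewrite nf_cs // size_nseq; lia.
Qed.

Lemma bigmin_le (T : finType) (P : pred T) (F : T -> nat) x i :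
  P i -> \big[minn/x]_(j | P j) F j <= F i.
Proof.
move=> Hi; have : i \in index_enum T by rewrite mem_index_enum.
elim: (index_enum T) => [//|y l IH] /=; rewrite in_cons big_cons.
case/orP => [/eqP <-|Hl]; first by rewrite Hi geq_minl.
case: ifP => _; last exact: IH.
exact: leq_trans (geq_minr _ _) (IH Hl).
Qed.

Lemma sum_le_pt (T : finType) (P Q : pred T) (F G : T -> nat) :
  (forall i, P i -> Q i /\ F i <= G i) ->
  \sum_(i | P i) F i <= \sum_(i | Q i) G i.
Proof.
move=> H; rewrite big_mkcond [X in _ <= X]big_mkcond; apply: leq_sum => i _.
case: (boolP (P i)) => Hp; last by [].
by have [-> ] := H i Hp.
Qed.

Lemma sum_le_one (T : finType) (P : pred T) (F : T -> nat) x0 :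
  (forall i, P i -> i = x0) -> \sum_(i | P i) F i <= F x0.
Proof.
move=> H; apply: (@leq_trans (\sum_(i | i == x0) F i)); last by rewrite big_pred1_eq.
by apply: sum_le_pt => i Hi; rewrite (H i Hi) eqxx.
Qed.

Lemma sum_odd m : \sum_(0 <= x < m | odd x) 1 = m./2.
Proof.
elim: m => [|m IH]; first by rewrite big_geq.
rewrite big_mkcond big_nat_recr //= -big_mkcond IH.
case: ifP => H; rewrite ?addn0 ?addn1 /=; lia.
Qed.

Lemma conflict (I : instance) (tau : schedule I) (Hf : feasible tau) (i j : 'I_(size I)) :
  i < j -> tau i = tau j -> ptime I i + ptime I j <= dline I j.
Proof.
move=> Hij Htau; have /forallP/(_ j) := Hf.
rewrite /completion (bigD1 j) /= ?leqnn ?eqxx // (bigD1 i) /=; last first.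
  by rewrite Htau eqxx (ltnW Hij) /= -val_eqE /= neq_ltn Hij.
lia.
Qed.

Section Tight.
Variable k : nat.
Local Notation tk := (tight_instance k).
Local Notation N := (size tk).

Lemma tk_p x : x < 3 * k + 1 ->
  ptime tk x = if x < 2 * k then (if odd x then 1 else k) else k + 1.
Proof. by move=> Hx; rewrite /ptime nth_tight Hx; case: ifP => //; case: ifP. Qed.

Lemma tk_d x : x < 3 * k + 1 ->
  dline tk x = if x < 2 * k then (if odd x then k + 1 else 2 * k) else 2 * k + 1.
Proof. by move=> Hx; rewrite /dline nth_tight Hx; case: ifP => //; case: ifP. Qed.

Lemma lower (tau : schedule tk) : feasible tau -> k.+1 <= nmach tau.
Proof.
move=> Hf.
have Hc : forall i : 'I_k.+1, 2 * k + i < N.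
  by move=> i; rewrite size_tight; have := ltn_ord i; lia.
pose cpos i := Ordinal (Hc i).
have Hpd : forall i : 'I_k.+1, ptime tk (2 * k + i) = k + 1 /\ dline tk (2 * k + i) = 2 * k + 1.
  move=> i; have := ltn_ord i => Hi.
  rewrite tk_p ?tk_d /=; try lia.
  by have -> : (2 * k + i < 2 * k) = false by lia.
have inj : injective (fun i => tau (cpos i)).
  move=> i1 i2 /= E; apply/val_inj; case: (ltngtP (val i1) (val i2)) => // H.
    have := conflict Hf (i:=cpos i1) (j:=cpos i2); rewrite /= ltn_add2l => /(_ H E).
    have [-> _] := Hpd i1; have [-> ->] := Hpd i2; lia.
  have := conflict Hf (i:=cpos i2) (j:=cpos i1); rewrite /= ltn_add2l => /(_ H (esym E)).
  have [-> _] := Hpd i2; have [-> ->] := Hpd i1; lia.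
rewrite /nmach; apply: (@leq_trans #|[set tau (cpos i) | i : 'I_k.+1]|).
  by rewrite card_imset // ?cardsT card_ord.
apply: subset_leq_card; apply/subsetP => x /imsetP [i _ ->]; exact: imset_f.
Qed.

Definition fsch (x : nat) := if x < 2 * k then (if odd x then k else x./2) else x - 2 * k.

Lemma fsch_le x : x < 3 * k + 1 -> fsch x <= k.
Proof. rewrite /fsch; case: ifP => H1; [case: ifP => H2|]; lia. Qed.

Definition tau0 : schedule tk := [ffun j : 'I_N => insubd j (fsch j)].

Lemma tau0E (j : 'I_N) : val (tau0 j) = fsch j.
Proof.
rewrite ffunE val_insubd; have Hj : (j : nat) < 3 * k + 1 by rewrite -size_tight ltn_ord.
have H : fsch j < N.
  by apply: (leq_ltn_trans (fsch_le Hj)); rewrite size_tight; lia.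
by rewrite H.
Qed.

Lemma feas0 : feasible tau0.
Proof.
apply/forallP => j; rewrite /completion.
have Hj : (j : nat) < 3 * k + 1 by rewrite -size_tight ltn_ord.
rewrite (bigID (fun x : 'I_N => x < 2 * k)) /=.
have PA : \sum_(x < N | (x <= j) && (tau0 x == tau0 j) && (x < 2 * k)) ptime tk x <= k.
  case: (boolP (fsch j == k)) => Hfj.
    apply: (@leq_trans (\sum_(x < N | odd x && (x < 2 * k)) 1)).
      apply: sum_le_pt => x /andP [/andP [_ Ht] Hx]; move: Ht.
      rewrite -val_eqE !tau0E (eqP Hfj) /fsch Hx tk_p ?Hx; last by lia.
      by case: (odd x) => // /eqP; lia.
    rewrite -(big_mkord (fun x => odd x && (x < 2 * k)) (fun _ => 1)).
    rewrite -big_nat_widen ?sum_odd ?size_tight; lia.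
  have H2c : 2 * fsch j < N.
    apply: (@leq_ltn_trans (2 * k)); first by have := fsch_le Hj; lia.
    by rewrite size_tight; lia.
  apply: (@leq_trans (ptime tk (Ordinal H2c))).
    apply: sum_le_one => x /andP [/andP [_ Ht] Hx]; apply/val_inj => /=; move: Ht.
    rewrite -val_eqE !tau0E /fsch Hx; move: Hfj; rewrite /fsch.
    case Ho: (odd x); case: ifP => H1; try case: ifP => H3; move=> /eqP Hn /eqP; lia.
  rewrite tk_p /=; last by have := fsch_le Hj; lia.
  move: Hfj; rewrite /fsch; case: ifP => H1; [case: ifP => H3|]; move=> /eqP Hn.
  - by case: Hn.
  - have -> : 2 * j./2 < 2 * k by lia.
    by rewrite oddM.
  - have -> : 2 * (j - 2 * k) < 2 * k by lia.
    by rewrite oddM.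
have PB : \sum_(x < N | (x <= j) && (tau0 x == tau0 j) && ~~ (x < 2 * k)) ptime tk x
          <= (if j < 2 * k then 0 else k + 1).
  case: ifP => Hj2.
    rewrite big_pred0 // => x; apply/negP => /andP [/andP [Hxj _] Hx]; lia.
  apply: (@leq_trans (ptime tk j)); last by rewrite tk_p ?Hj2.
  apply: sum_le_one => x /andP [/andP [Hxj Ht] Hx]; apply/val_inj => /=; move: Ht.
  rewrite -val_eqE !tau0E /fsch; rewrite (negbTE Hx) Hj2 => /eqP; lia.
rewrite tk_d //; apply: (leq_trans (leq_add PA PB)); case: ifP => H1; [case: ifP => H2|]; lia.
Qed.

Lemma nmach0 : nmach tau0 <= k.+1.
Proof.
have H0 : 0 < N by rewrite size_tight; lia.
pose j0 := Ordinal H0.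
pose g := fun i : 'I_k.+1 => (insubd j0 i : 'I_N).
apply: (@leq_trans #|[set g i | i : 'I_k.+1]|); last by rewrite (leq_trans (leq_imset_card _ _)) // card_ord.
apply: subset_leq_card; apply/subsetP => x /imsetP [j _ ->].
have Hj : (j : nat) < 3 * k + 1 by rewrite -size_tight ltn_ord.
have Hf := fsch_le Hj.
have Hlt : fsch j < k.+1 by lia.
apply/imsetP; exists (Ordinal Hlt) => //; apply/val_inj.
have HN : fsch j < N.
  by apply: (leq_ltn_trans Hf); rewrite size_tight; lia.
by rewrite tau0E /g val_insubd /= HN.
Qed.

Lemma OPT_tight : OPT tk = k + 1.
Proof.
apply/eqP; rewrite eqn_leq; apply/andP; split.
  apply: (leq_trans (bigmin_le _ _ feas0)); rewrite addn1; exact: nmach0.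
rewrite /OPT addn1; apply: (big_ind (fun x => k.+1 <= x)).
- by rewrite size_tight; lia.
- by move=> x y Hx Hy; rewrite leq_min Hx Hy.
- by move=> tau Hf; exact: lower.
Qed.

End Tight.

Module BPart.
From mathcomp Require Import all_order all_algebra ring lra.
Import Order.TTheory GRing.Theory Num.Theory.

Section Main.
Variable I : instance.
Hypothesis Hv : valid_instance I.
Hypothesis Hs : slack_nonincr I.
Variable tau : schedule I.
Hypothesis Hf : feasible tau.
Local Notation n := (size I).
Local Notation p := (ptime I).
Local Notation s := (slack I).

Definition load (M : 'I_n) (a : nat) :=
  \sum_(k < n | (k < a) && (tau k == M)) p k.
Definition alive (M : 'I_n) (a : nat) :=
  [exists k : 'I_n, (a <= k) && (tau k == M)].
Definition used (M : 'I_n) (a : nat) :=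
  [exists k : 'I_n, (k < a) && (tau k == M)].
Definition lam (M : 'I_n) (a b : nat) :=
  \sum_(k < n | (a <= k < b) && (tau k == M)) p k.

Lemma feas_load (j : 'I_n) : load (tau j) j <= s j.
Proof.
have /forallP/(_ j) := Hf; rewrite /completion (bigD1 j) //= ?leqnn ?eqxx //.
have [H1 H2] := valid_nth Hv (ltn_ord j).
suff -> : \sum_(i < n | ((i <= j) && (tau i == tau j)) && (i != j)) p i
          = load (tau j) j by rewrite /slack /dline; lia.
apply: eq_bigl => i; rewrite ltn_neqAle.
have -> : (i != j :> nat) = (i != j) by [].
by case: (i == j); rewrite ?andbF ?andbT //= andbC.
Qed.

Lemma load_split M a b : a <= b -> load M b = load M a + lam M a b.
Proof.
move=> Hab; rewrite /load /lam.
rewrite (big_mkcond (fun k : 'I_n => (k < b) && (tau k == M))).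
rewrite (big_mkcond (fun k : 'I_n => (k < a) && (tau k == M))).
rewrite (big_mkcond (fun k : 'I_n => (a <= k < b) && (tau k == M))).
rewrite -big_split /=.
apply: eq_bigr => i _; case: (tau i == M); rewrite ?andbT ?andbF //.
case: (ltnP i a) => Hi /=; first by rewrite (leq_trans Hi Hab) addn0.
by rewrite add0n.
Qed.

Lemma load_mono M a b : a <= b -> load M a <= load M b.
Proof. by move=> Hab; rewrite (load_split M Hab) leq_addr. Qed.

Lemma alive_load M b : alive M b -> load M b <= s b.
Proof.
case/existsP => k /andP [Hbk /eqP HkM].
apply: (leq_trans (load_mono M Hbk)); rewrite -HkM.
apply: (leq_trans (feas_load k)); exact: Hs Hbk (ltn_ord k).
Qed.

Lemma alive_mono M a b : a <= b -> alive M b -> alive M a.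
Proof.
move=> Hab /existsP [k /andP [H1 H2]]; apply/existsP; exists k.
by rewrite H2 (leq_trans Hab H1).
Qed.

Lemma alive_lt M a : alive M a -> a < n.
Proof. by case/existsP => k /andP [H _]; exact: leq_ltn_trans H (ltn_ord k). Qed.

Lemma dying_used M a b : alive M a -> ~~ alive M b -> used M b.
Proof.
case/existsP => k /andP [H1 H2] Hb; apply/existsP; exists k; rewrite H2 andbT.
rewrite ltnNge; apply/negP => Hk; move/negP: Hb; apply; apply/existsP; exists k.
by rewrite Hk H2.
Qed.

Lemma notalive_used M a b : a <= b -> ~~ alive M a -> used M b = used M a.
Proof.
move=> Hab Ha; apply/idP/idP; case/existsP => k /andP [H1 H2]; apply/existsP;
  exists k; rewrite H2 andbT //; last by exact: leq_trans H1 Hab.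
rewrite ltnNge; apply/negP => Hk; move/negP: Ha; apply; apply/existsP; exists k.
by rewrite Hk H2.
Qed.

Lemma notalive_lam0 M a b : ~~ alive M a -> lam M a b = 0%N.
Proof.
move=> Ha; rewrite /lam big_pred0 // => k; apply/negP => /andP [/andP [H1 _] H2].
by move/negP: Ha; apply; apply/existsP; exists k; rewrite H1 H2.
Qed.

Lemma load0 M : load M 0 = 0%N.
Proof. by rewrite /load big_pred0. Qed.

Local Open Scope ring_scope.

Definition term (M : 'I_n) (a : nat) : rat :=
  if alive M a then (load M a)%:R / (s a)%:R
  else if used M a then 2%:R else 0.

Definition gfun (M : 'I_n) (a b : nat) : rat :=
  if alive M b then (lam M a b)%:R / (s b)%:R
  else if alive M a then 2%:R - (load M a)%:R / (s a)%:R else 0.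

Lemma ratio_le1 M a : alive M a -> (load M a)%:R / (s a)%:R <= 1 :> rat.
Proof.
move=> Ha; have := alive_load Ha; case: (posnP (s a)) => [-> |Hpos] Hl.
  by rewrite invr0 mulr0.
rewrite ler_pdivrMr ?ltr0n // mul1r ler_nat //.
Qed.

Lemma ratio_ge0 (x y : nat) : 0 <= x%:R / y%:R :> rat.
Proof. by rewrite divr_ge0 ?ler0n. Qed.

Lemma term_step M a b : (a <= b)%N -> term M a + gfun M a b <= term M b.
Proof.
move=> Hab; rewrite /term /gfun.
case Hb: (alive M b).
  have Ha := alive_mono Hab Hb; rewrite Ha.
  rewrite (load_split M Hab) natrD mulrDl lerD2r.
  have Hlb := alive_load Hb.
  case: (posnP (s b)) => [Hs0|Hpos].
    have : load M a = 0%N.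
      by move: Hlb; rewrite Hs0 (load_split M Hab); lia.
    by move=> ->; rewrite !mul0r.
  apply: ler_wpM2l; first by rewrite ler0n.
  have Hba : (s b <= s a)%N by apply: Hs Hab (alive_lt Hb).
  rewrite lef_pV2 ?ler_nat // posrE ltr0n //; lia.
case Ha: (alive M a).
  by rewrite (dying_used Ha (negbT Hb)) addrC subrK.
by rewrite (notalive_used Hab (negbT Ha)) addr0.
Qed.

Lemma gfun_ge0 M a b : (a <= b)%N -> 0 <= gfun M a b.
Proof.
move=> Hab; rewrite /gfun; case: ifP => _; first exact: ratio_ge0.
case: ifP => Ha //; have := ratio_le1 Ha; lra.
Qed.

Lemma sum_lam a b : \sum_(M : 'I_n) lam M a b = \sum_(k < n | (a <= k < b)%N) p k.
Proof.
rewrite [RHS](partition_big (fun k : 'I_n => tau k) predT) //.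
Qed.

Lemma window a b : (a <= b)%N -> (s b < \sum_(k < n | (a <= k < b)%N) p k)%N ->
  1 <= \sum_(M : 'I_n) gfun M a b /\ (a = 0%N -> 1 < \sum_(M : 'I_n) gfun M a b).
Proof.
move=> Hab Hover.
case: (boolP [exists M, alive M a && ~~ alive M b]).
  case/existsP => M /andP [Ha Hb].
  have HgM : gfun M a b = 2%:R - (load M a)%:R / (s a)%:R by rewrite /gfun (negbTE Hb) Ha.
  have Hrest : 0 <= \sum_(M' < n | M' != M) gfun M' a b.
    by apply: sumr_ge0 => M' _; exact: gfun_ge0.
  have Hr := ratio_le1 Ha.
  rewrite (bigD1 M) //= HgM; split; first lra.
  move=> Ha0; subst a; move: Hr; rewrite load0 mul0r => Hr; lra.
move=> Hnone.
have Hall : forall M, alive M a -> alive M b.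
  move=> M Ha; case Hb: (alive M b) => //; move/negP: Hnone; case.
  by apply/existsP; exists M; rewrite Ha Hb.
have Hg : forall M, gfun M a b = (lam M a b)%:R / (s b)%:R.
  move=> M; rewrite /gfun; case: ifP => // Hb.
  case: ifP => Ha; first by rewrite (Hall _ Ha) in Hb.
  by rewrite notalive_lam0 ?Ha // mul0r.
rewrite (eq_bigr _ (fun M _ => Hg M)) -mulr_suml -natr_sum sum_lam.
suff H : 1 < (\sum_(k < n | (a <= k < b)%N) p k)%:R / (s b)%:R :> rat.
  by split=> [|_]; [exact: ltW|].
case: (posnP (s b)) => [Hs0|Hpos].
  exfalso; move: Hover; rewrite -sum_lam big1 // => M _.
  case Hb: (alive M b).
    have := alive_load Hb; rewrite Hs0 (load_split M Hab); lia.
  apply: notalive_lam0; apply/negP => Ha; by rewrite (Hall _ Ha) in Hb.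
by rewrite ltr_pdivlMr ?ltr0n // mul1r ltr_nat.
Qed.

Definition RHS (a : nat) : rat := \sum_(M : 'I_n) term M a.

Lemma RHS0 : RHS 0 = 0.
Proof.
rewrite /RHS big1 // => M _; rewrite /term load0 mul0r.
case: ifP => // _; case: ifP => // /existsP [k /andP [H _]] //.
Qed.

Lemma RHS_step a b : (a <= b)%N -> (s b < \sum_(k < n | (a <= k < b)%N) p k)%N ->
  RHS a + 1 <= RHS b /\ (a = 0%N -> 1 < RHS b).
Proof.
move=> Hab Hover; have [W1 W2] := window Hab Hover.
have Hle : RHS a + \sum_(M : 'I_n) gfun M a b <= RHS b.
  rewrite /RHS -big_split /=; apply: ler_sum => M _; exact: term_step.
split; first by lra.
move=> Ha0; have := W2 Ha0; move: Hle; rewrite Ha0 RHS0; lra.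
Qed.

Lemma sum_range_S a j : (j < n)%N -> (a <= j)%N ->
  \sum_(k < n | (a <= k < j.+1)%N) p k = (\sum_(k < n | (a <= k < j)%N) p k + p j)%N.
Proof.
move=> Hj Haj; rewrite (bigD1 (Ordinal Hj)) /= ?Haj ?ltnSn // addnC; congr (_ + _)%N.
apply: eq_bigl => k; rewrite -val_eqE /= ltnS.
case: (ltngtP k j) => H; rewrite ?andbT ?andbF //=; lia.
Qed.

Lemma sum_range_1 j : (j < n)%N -> \sum_(k < n | (j <= k < j.+1)%N) p k = p j.
Proof.
move=> Hj; rewrite sum_range_S ?leqnn // big_pred0 // => k; lia.
Qed.

Lemma NF_inv j : (0 < j)%N -> (j <= n)%N -> exists ls L a,
  foldl nf_step [::] (take j I) = rcons ls L /\ (a < j)%N /\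
  L = \sum_(k < n | (a <= k < j)%N) p k /\ (size ls <= a)%N /\
  (a = 0%N -> ls = [::]) /\ ((0 < a)%N -> (size ls)%:R < RHS a).
Proof.
elim: j => [//|j IH] _ Hj.
have Hj' : (j < n)%N by [].
rewrite (take_nth (0,0) Hj') foldl_rcons.
have [Hp Hd] := valid_nth Hv Hj'.
case: (posnP j) => [Hj0|Hjpos].
  rewrite Hj0 take0 /=; exists [::], (p 0), 0%N; split=> //; split=> //.
  split; last by split.
  by rewrite sum_range_1 // -Hj0.
have [ls [L [a [-> [Haj [HL [Hsz [Ha0 Hrhs]]]]]]]] := IH Hjpos (ltnW Hj).
rewrite nf_step_rcons /=.
case: ifP => Hfit.
  exists ls, (L + p j)%N, a; split=> //; split; first lia.
  split; last by [].
  by rewrite sum_range_S // ?HL //; lia.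
exists (rcons ls L), (p j), j; split=> //; split=> //; split.
  by rewrite sum_range_1.
split; first by rewrite size_rcons; lia.
split; first by move=> Hj0; rewrite Hj0 in Hjpos.
move=> _.
have Hover : (s j < \sum_(k < n | (a <= k < j)%N) p k)%N.
  have : ~~ (L + p j <= dline I j)%N by rewrite /ptime /dline Hfit.
  rewrite -ltnNge -HL /slack => H'; lia.
have [S1 S2] := RHS_step (ltnW Haj) Hover.
rewrite size_rcons -addn1 natrD.
case: (posnP a) => [Ha|Hapos].
  by rewrite (Ha0 Ha) /= add0r; exact: S2.
have := Hrhs Hapos; lra.
Qed.

Lemma RHS_bound a (Hl : (n.-1 < n)%N) : (a < n)%N ->
  RHS a <= (#|[set tau j | j : 'I_n]| + #|[set tau j | j : 'I_n] :\ tau (Ordinal Hl)|)%:R.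
Proof.
move=> Han; set img := [set tau j | j : 'I_n]; set jl := Ordinal Hl.
have Halive : alive (tau jl) a.
  by apply/existsP; exists jl; rewrite eqxx andbT /=; lia.
have Hsum : (\sum_(M : 'I_n) ((M \in img) + (M \in img :\ tau jl)))%N =
              (#|img| + #|img :\ tau jl|)%N.
  rewrite big_split /= -!sum1_card !(big_mkcond (fun i => i \in _)) /=.
  by congr (_ + _)%N; apply: eq_bigr => i _; case: (i \in _).
rewrite -Hsum natr_sum /RHS.
apply: ler_sum => M _; rewrite /term.
case: ifP => Ha.
  have HM : M \in img.
    by case/existsP: Ha => k /andP [_ /eqP <-]; rewrite imset_f.
  rewrite HM natrD; have := ratio_le1 Ha; case: (M \in img :\ tau jl) => /=; lra.
case: ifP => Hu //.
have HM : M \in img.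
  by case/existsP: Hu => k /andP [_ /eqP <-]; rewrite imset_f.
have HMl : M != tau jl.
  by apply/eqP => HMe; rewrite HMe Halive in Ha.
by rewrite !inE HMl HM.
Qed.

Lemma NF_bound : (0 < n)%N -> (NF I < 2 * nmach tau)%N.
Proof.
move=> Hn; have Hl : (n.-1 < n)%N by lia.
have [ls [L [a [Hfold [Han [_ [_ [Ha0 Hrhs]]]]]]]] := NF_inv Hn (leqnn n).
rewrite /NF -{1}(take_size I) Hfold size_rcons /nmach.
set img := [set tau j | j : 'I_n].
have Himg : tau (Ordinal Hl) \in img by rewrite imset_f.
have Hcard := cardsD1 (tau (Ordinal Hl)) img; rewrite Himg in Hcard.
case: (posnP a) => [Ha|Hapos].
  rewrite (Ha0 Ha) /=; have : (0 < #|img|)%N by apply/card_gt0P; exists (tau (Ordinal Hl)).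
  by move=> HH; rewrite mul2n -addnn; exact: (leq_add HH HH).
have H1 := Hrhs Hapos; have H2 := RHS_bound Hl Han.
have : (size ls)%:R < (#|img| + #|img :\ tau (Ordinal Hl)|)%:R :> rat by exact: lt_le_trans H1 H2.
rewrite ltr_nat; lia.
Qed.

End Main.

End BPart.
Import BPart.

Lemma nf_step_size ls job : size (nf_step ls job) = (size ls).+1 \/ size (nf_step ls job) = size ls /\ 0 < size ls.
Proof.
case: ls => [|x s] /=; first by left.
case: ifP => _; [right | left]; rewrite /= size_rcons ?size_belast //.
Qed.

Lemma foldl_nf_size l z : size (foldl nf_step z l) <= size z + size l /\
  (0 < size z + size l -> 0 < size (foldl nf_step z l)).
Proof.
elim: l z => [|x l IH] z /=; first by rewrite addn0.
have [H1 H2] := IH (nf_step z x).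
case: (nf_step_size z x) => [E|[E Hz]]; rewrite E in H1 H2; split; lia.
Qed.

Lemma part1 (I : instance) : valid_instance I -> slack_nonincr I ->
     NF I = FF I /\
     (OPT I = 1 -> FF I = 1) /\
     (2 <= OPT I -> FF I < 2 * OPT I).
Proof.
move=> Hv Hs; rewrite FF_eq_NF //; split=> //.
have [Hle Hge] := foldl_nf_size I [::]; rewrite /= in Hle Hge.
rewrite /OPT.
apply: (big_ind (fun x => (x = 1 -> NF I = 1) /\ (2 <= x -> NF I < 2 * x))).
- rewrite /NF; split=> Hn; (have H1 : 0 < size I by lia); have := Hge H1; lia.
- move=> x y [Hx1 Hx2] [Hy1 Hy2]; case: (leqP x y) => Hxy.
    by [].
  by [].
- move=> tau Hf.
  case: (posnP (nmach tau)) => [->|Hpos]; first by [].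
  have Hn : 0 < size I.
    move/card_gt0P: Hpos => [M /imsetP [j _ _]]; exact: leq_ltn_trans (leq0n j) (ltn_ord j).
  have := NF_bound Hv Hs Hf Hn; have := Hge; rewrite /NF; lia.
Qed.


Theorem mainTheorem5 :
  (forall I : instance, valid_instance I -> slack_nonincr I ->
     NF I = FF I /\
     (OPT I = 1 -> FF I = 1) /\
     (2 <= OPT I -> FF I < 2 * OPT I)) /\
  (forall k : nat, 1 <= k ->
     valid_instance (tight_instance k) /\ slack_nonincr (tight_instance k) /\
     size (tight_instance k) = 3 * k + 1 /\
     OPT (tight_instance k) = k + 1 /\ FF (tight_instance k) = 2 * k + 1).
Proof.
split; first exact: part1.
move=> k Hk; split; first exact: valid_tight.
split; first exact: nonincr_tight.
split; first exact: size_tight.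
split; first exact: OPT_tight.
exact: FF_tight.
Qed.
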